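(* For every integer $k\ge 0$ and every list $L$ of $k$ pairwise distinct elements, running $\mathrm{Permutations}(L,0,\mathrm{Func})$ calls $\mathrm{Func}$ exactly $k!$ times, and the lists passed to $\mathrm{Func}$ are exactly the $k!$ permutations (orderings) of the elements of $L$, each occurring exactly once.
   Context: Lists are 0-indexed. For a list $L$, $\mathrm{extract}(L,j)$ removes the element at position $j$ from $L$ and returns it; $\mathrm{Insert}(L,i,x)$ inserts $x$ into $L$ so that it occupies position $i$, shifting the elements previously at positions $\ge i$ one step to the right. Each combined operation $\mathrm{Insert}(L,i,\mathrm{extract}(L,j))$ first extracts, then inserts, so the length of $L$ is unchanged. The recursive procedure $\mathrm{Permutations}(L,i,\mathrm{Func})$ (with $\mathrm{Func}$ a callback applied to the current state of the list) is: let $n=\mathrm{length}(L)$. If $i\ge n-1$, call $\mathrm{Func}(L)$. Otherwise: (1) call $\mathrm{Permutations}(L,i+1,\mathrm{Func})$; (2) do $\mathrm{Insert}(L,i,\mathrm{extract}(L,i+1))$ and call $\mathrm{Permutations}(L,i+1,\mathrm{Func})$; (3) repeat $\max(n-i-3,0)$ times: if $n-i$ is even, do $\mathrm{Insert}(L,i,\mathrm{extract}(L,n-1))$, otherwise do $\mathrm{Insert}(L,i,\mathrm{extract}(L,i+1))$; then call $\mathrm{Permutations}(L,i+1,\mathrm{Func})$; (4) if $n-i>2$: do $\mathrm{Insert}(L,i,\mathrm{extract}(L,i+1))$ and call $\mathrm{Permutations}(L,i+1,\mathrm{Func})$. *)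

(* Defs.v *)
From mathcomp Require Import all_boot.
Set Implicit Arguments. Unset Strict Implicit. Unset Printing Implicit Defensive.

Section PermAlgo.
Variable T : Type.

Definition Insert (L : seq T) (i : nat) (x : T) : seq T :=
  take i L ++ x :: drop i L.

(* Insert(L, i, extract(L, j)): remove the element at position j, then insert
   it at position i.  (If j is out of range, extract is undefined; we leave L
   unchanged -- this case never arises in the procedure.) *)
Definition move (L : seq T) (i j : nat) : seq T :=
  match drop j L with
  | x :: _ => Insert (take j L ++ drop j.+1 L) i x
  | [::] => L
  end.

(* perm_aux fuel i L = (list of the states passed to Func, in call order,
   final state of L).  The fuel only ensures termination; called with
   fuel = size L from i = 0 it never runs out. *)
Fixpoint perm_aux (fuel i : nat) (L : seq T) : seq (seq T) * seq T :=
  match fuel with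
  | 0 => ([:: L], L)
  | f.+1 =>
    let n := size L in
    if n.-1 <= i then ([:: L], L) else
    let '(o1, L1) := perm_aux f i.+1 L in
    let '(o2, L2) := perm_aux f i.+1 (move L1 i i.+1) in
    let step (st : seq (seq T) * seq T) :=
      let '(o, M) := st in
      let M' := if ~~ odd (n - i) then move M i n.-1 else move M i i.+1 in
      let '(o', M'') := perm_aux f i.+1 M' in
      (o ++ o', M'') in
    let '(o3, L3) := iter (n - i - 3) step (o1 ++ o2, L2) in
    if 2 < n - i then
      let '(o4, L4) := perm_aux f i.+1 (move L3 i i.+1) in (o3 ++ o4, L4)
    else (o3, L3)
  end.

Definition Permutations (L : seq T) (i : nat) : seq (seq T) * seq T :=
  perm_aux (size L) i L.

Definition func_calls (L : seq T) (i : nat) : seq (seq T) := (Permutations L i).1.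

End PermAlgo.

(* Main.v *)
Require Import Defs.
From mathcomp Require Import all_boot zify.
Set Implicit Arguments. Unset Strict Implicit. Unset Printing Implicit Defensive.
Section S.
Variable T : Type.
Implicit Types (L M s t : seq T).

Definition lev (blk : seq T -> seq (seq T) * seq T) (i : nat) (L : seq T) :=
    let n := size L in
    let '(o1, L1) := blk L in
    let '(o2, L2) := blk (move L1 i i.+1) in
    let step (st : seq (seq T) * seq T) :=
      let '(o, M) := st in
      let M' := if ~~ odd (n - i) then move M i n.-1 else move M i i.+1 in
      let '(o', M'') := blk M' in
      (o ++ o', M'') in
    let '(o3, L3) := iter (n - i - 3) step (o1 ++ o2, L2) in
    if 2 < n - i then
      let '(o4, L4) := blk (move L3 i i.+1) in (o3 ++ o4, L4)
    else (o3, L3).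

Lemma perm_auxS f i L : perm_aux f.+1 i L =
  if (size L).-1 <= i then ([:: L], L) else lev (perm_aux f i.+1) i L.
Proof. by []. Qed.

Lemma move_cons x L i j : move (x :: L) i.+1 j.+1 = x :: move L i j.
Proof. rewrite /move /=. case: (drop j L) => [|y r] //. Qed.



Definition phi x (p : seq (seq T) * seq T) := (map (cons x) p.1, x :: p.2).

Lemma lev_shift x (b1 b2 : seq T -> seq (seq T) * seq T) j s :
  0 < size s ->
  (forall M, b1 (x :: M) = phi x (b2 M)) ->
  lev b1 j.+1 (x :: s) = phi x (lev b2 j s).
Proof.
move=> hs H; rewrite /lev /=.
rewrite H; case: (b2 s) => o1 L1 /=.
rewrite move_cons H; case: (b2 _) => o2 L2 /=.
rewrite -map_cat.
have ->: ([seq x :: i | i <- o1 ++ o2], x :: L2) = phi x (o1 ++ o2, L2) by [].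
rewrite !subSS.
have hs' : size s = (size s).-1.+1 by lia.
move: (size s - j - 3) => k.
set F := (fun '(o, M) => _); set G := (fun '(o, M) => _).
have ->: forall st, iter k F (phi x st) = phi x (iter k G st).
  move=> st; elim: k => //= k ->.
  case: (iter k G st) => o M /=.
  rewrite /F /G /=.
  (case: (~~ odd _); first rewrite {1}hs'); rewrite move_cons H; case: (b2 _) => ? ?; by rewrite /phi /= map_cat.
case: (iter k G _) => o3 L3 /=.
case: ifP => _ //.
rewrite move_cons H; case: (b2 _) => ? ?; by rewrite /phi /= map_cat.
Qed.

Lemma perm_aux_shift f j x s : perm_aux f j.+1 (x :: s) = phi x (perm_aux f j s).
Proof.
elim: f j x s => [//|f IH] j x s.
rewrite !perm_auxS /=.
have -> : (size s <= j.+1) = ((size s).-1 <= j) by apply/idP/idP; lia.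
case: ifP => h //.
apply: lev_shift => //; first lia.
Qed.
End S.

Section Main.
Variable T : eqType.
Implicit Types (L M s t u w : seq T).

Definition swap L := if L is a :: b :: r then b :: a :: r else L.
Definition sig s := if odd (size s) then swap s else
  match s with
  | x0 :: x1 :: x2 :: x3 :: x4 :: r => x1 :: x4 :: x3 :: r ++ [:: x2; x0]
  | [:: x0; x1; x2; x3] => [:: x1; x2; x3; x0]
  | _ => swap s
  end.
Fixpoint ev w : seq T := if w is x :: r then x :: od r else [::]
with od w : seq T := if w is _ :: r then ev r else [::].
Definition g L := if L is x :: t then swap (x :: sig t) else L.
Definition rd L := match L with
 | x0 :: x1 :: x2 :: x3 :: x4 :: w => x0 :: x2 :: ev w ++ [:: x3; x4] ++ od w ++ [:: x1]
 | [:: x0; x1; x2] => [:: x0; x2; x1]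
 | _ => L end.

Ltac permt := apply/permP => ?; rewrite /= ?count_cat /= ?count_cat /=; lia.

Lemma swapK L : swap (swap L) = L.
Proof. by case: L => [|a [|b r]]. Qed.
Lemma size_swap L : size (swap L) = size L.
Proof. by case: L => [|a [|b r]]. Qed.
Lemma perm_swap L : perm_eq (swap L) L.
Proof. case: L => [|a [|b r]] //; permt. Qed.
Lemma move01 L : move L 0 1 = swap L.
Proof. by case: L => [|a [|b r]] //; rewrite /move /Insert /= drop0. Qed.
Lemma move_last u z : move (rcons u z) 0 (size u) = z :: u.
Proof.
rewrite /move -cats1 drop_size_cat //= /Insert take0 drop0 take_size_cat //.
by rewrite drop_oversize ?cats0 // size_cat /= addn1.
Qed.
Lemma perm_sig s : perm_eq (sig s) s.
Proof.
rewrite /sig; case: ifP => _; first exact: perm_swap.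
case: s => [|x0 [|x1 [|x2 [|x3 [|x4 r]]]]] //; try permt.
Qed.
Lemma size_sig s : size (sig s) = size s.
Proof. exact: perm_size (perm_sig s). Qed.
Lemma perm_g L : perm_eq (g L) L.
Proof.
case: L => [|x t] //. apply: (perm_trans (perm_swap _)). by rewrite perm_cons perm_sig.
Qed.
Lemma size_g L : size (g L) = size L.
Proof. exact: perm_size (perm_g L). Qed.

Lemma evod_count p w : count p (ev w) + count p (od w) = count p w.
Proof. elim: w => //= x r IH; lia. Qed.
Lemma evod_size w : size (ev w) = uphalf (size w) /\ size (od w) = (size w)./2.
Proof. elim: w => //= x r [-> ->]. by rewrite uphalfE. Qed.
Lemma evod_cat w1 w2 :
  ev (w1 ++ w2) = ev w1 ++ (if odd (size w1) then od w2 else ev w2) /\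
  od (w1 ++ w2) = od w1 ++ (if odd (size w1) then ev w2 else od w2).
Proof.
elim: w1 => [|x r [IH1 IH2]] //=.
rewrite IH1 IH2; case: (odd _) => //.
Qed.
Lemma evod_inj w w' : size w = size w' -> ev w = ev w' -> od w = od w' -> w = w'.
Proof.
elim: w w' => [|x r IH] [|x' r'] //= [hs] [-> h1] h2.
by rewrite (IH r').
Qed.

Lemma perm_rd L : perm_eq (rd L) L.
Proof.
case: L => [|x0 [|x1 [|x2 [|x3 [|x4 w]]]]] //; try permt.
apply/permP => p; rewrite /= !count_cat /=.
rewrite count_cat /=; have := evod_count p w; lia.
Qed.

Lemma rd_g L : odd (size L) -> 3 <= size L -> rd (g L) = rot 1 (rd L).
Proof.
case: L => [|x0 [|x1 [|x2 [|x3 [|x4 [|x5 [|r0 r]]]]]]] //=.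
rewrite !negbK => /negPf hodd _.
rewrite /sig /= !negbK hodd /=.
have [h1 h2] := evod_cat r [:: x3; x1].
rewrite /rot /= h1 h2 hodd /=.
by rewrite -!catA /= -!catA.
Qed.

Lemma rd_inj L L' : size L = size L' -> odd (size L) -> 3 <= size L -> rd L = rd L' -> L = L'.
Proof.
case: L => [|x0 [|x1 [|x2 [|x3 [|x4 w]]]]] //;
case: L' => [|y0 [|y1 [|y2 [|y3 [|y4 w']]]]] //=.
by move=> _ _ _ [-> -> ->].
move=> [hs] _ _ [-> ->] /eqP.
have [s1 s2] := evod_size w; have [s1' s2'] := evod_size w'.
rewrite eqseq_cat; last by rewrite s1 s1' hs.
case/andP => /eqP e1 /eqP [-> -> /eqP].
rewrite eqseq_cat; last by rewrite s2 s2' hs.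
case/andP => /eqP e2 /eqP [->].
by rewrite (evod_inj hs e1 e2).
Qed.

Definition Spec (O : seq (seq T)) t :=
  [/\ uniq O, size O = (size t)`! & forall u, u \in O <-> perm_eq u t].
Definition hdin (H : seq T) u := if u is y :: _ then y \in H else false.

Section Level.
Variable blk : seq T -> seq (seq T) * seq T.
Variable s : seq T.
Hypothesis us : uniq s.
Hypothesis m2 : 1 < size s.
Hypothesis Hb : forall x t, perm_eq (x :: t) s ->
  (blk (x :: t)).2 = x :: sig t /\ exists O, (blk (x :: t)).1 = map (cons x) O /\ Spec O t.

Definition Good o H :=
  [/\ uniq o, size o = size H * (size s).-1`! & forall u, u \in o <-> perm_eq u s /\ hdin H u].

Lemma good0 : Good [::] [::].
Proof. rewrite /Good; split => //; move=> u; rewrite in_nil; split => //; by case=> _; case: u. Qed.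

Lemma blk_step o H x t o' L' : Good o H -> perm_eq (x :: t) s -> x \notin H ->
  blk (x :: t) = (o', L') -> Good (o ++ o') (x :: H) /\ L' = x :: sig t.
Proof.
move=> [uo so mo] hp hx hB.
have [h2 [O [h1 [uO sO mO]]]] := Hb hp.
rewrite hB /= in h1 h2; subst o' L'; split => //.
have st : size t = (size s).-1 by rewrite -(perm_size hp).
rewrite /Good; split.
  rewrite cat_uniq uo map_inj_uniq //=; last by move=> ? ? [].
  rewrite uO andbT; apply/hasPn => v /mapP [w _ ->]; apply/negP => /mo [_ /=].
  by rewrite (negbTE hx).
  by rewrite size_cat size_map sO st so /= mulSn addnC.
move=> u; rewrite mem_cat; split.
  case/orP => [/mo [p h] | /mapP [w wO ->]].
    by split => //; case: u h p => //= y _ h _; rewrite in_cons h orbT.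
  split; last by rewrite /= in_cons eqxx.
  apply: (perm_trans _ hp); rewrite perm_cons; exact/mO.
move=> [p]; case: u p => [|y w] //= p; rewrite in_cons => /orP [/eqP ey | yH].
  subst y; apply/orP; right; apply/mapP; exists w => //; apply/mO.
  by rewrite -(perm_cons x); apply: (perm_trans p); rewrite perm_sym.
by apply/orP; left; apply/mo; split.
Qed.

Lemma good_fin o H : Good o H -> perm_eq H s -> Spec o s.
Proof.
move=> [uo so mo] hH; split => //.
  by rewrite so (perm_size hH); case: (size s) m2 => // n _; rewrite factS.
move=> u; split; first by case/mo.
move=> p; apply/mo; split => //.
case: u p => [|y w] p; first by have := perm_size p; case: (size s) m2.
by rewrite /= (perm_mem hH) -(perm_mem p) mem_head.
Qed.

Lemma notin_of x H r : perm_eq (x :: H ++ r) s -> x \notin H.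
Proof.
move/perm_uniq; rewrite us /= => /andP [h _].
by apply/negP => hx; move: h; rewrite mem_cat hx.
Qed.

Lemma sig_odd t : odd (size t) -> sig t = swap t.
Proof. by rewrite /sig => ->. Qed.

Lemma lev_even : ~~ odd (size s) -> 3 <= size s ->
  Spec (lev blk 0 s).1 s /\ (lev blk 0 s).2 = sig s.
Proof.
move=> hodd m3.
have [a0 [a1 [a2 [w Es]]]] : exists a0 a1 a2 w, s = [:: a0, a1, a2 & w].
  by move: m3; case: (s) => [|a0 [|a1 [|a2 w]]] //= _; exists a0, a1, a2, w.
have sw : size s = (size w).+3 by rewrite Es.
have ow : odd (size w) by move: hodd; rewrite sw /= !negbK.
rewrite /lev subn0 hodd.
set F := (fun '(o, M) => _).
case B1: (blk s) => [o1 L1].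
rewrite Es in B1.
have hp1 : perm_eq (a0 :: [:: a1, a2 & w]) s by rewrite Es.
have [G1 E1] := blk_step good0 hp1 (isT : a0 \notin [::]) B1.
rewrite E1 sig_odd /=; last by rewrite ow.
rewrite move01 /=.
case B2: (blk [:: a2, a0, a1 & w]) => [o2 L2].
have hp2 : perm_eq (a2 :: [:: a0, a1 & w]) s by rewrite Es; permt.
have n2 : a2 \notin [:: a0].
  by apply: (notin_of (r := a1 :: w)); rewrite Es; permt.
have [G2 E2] := blk_step G1 hp2 n2 B2.
rewrite E2 sig_odd /= in G2 *; last by rewrite ow.
have inv : forall r, r <= size w -> exists u v y z,
  [/\ w = u ++ v, size v = r, y :: z = v ++ [:: a2],
      (iter r F (o1 ++ o2, [:: a2, a1, a0 & w])).2 = y :: a1 :: z ++ a0 :: u &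
      Good (iter r F (o1 ++ o2, [:: a2, a1, a0 & w])).1 (v ++ [:: a2; a0])].
  elim=> [_|r IH hr].
    by exists w, [::], a2, [::]; rewrite cats0.
  have [u [v [y [z [hw hv hyz hM hG]]]]] := IH (ltnW hr).
  rewrite iterS; move: hM hG; case: (iter r F _) => o M /= -> hG.
  have : 0 < size u by move: hr; rewrite hw size_cat hv; lia.
  case/lastP: u hw => [//|u' b] hw _.
  have sz : size z = r by move: (congr1 size hyz); rewrite size_cat hv /= addn1 => -[].
  rewrite -rcons_cons -rcons_cat -!rcons_cons.
  have -> : (size s).-1 = size [:: y, a1 & z ++ a0 :: u'].
    by rewrite sw hw size_cat size_rcons hv /= size_cat sz /=; lia.
  rewrite move_last.
  case B: (blk _) => [o' M'].
  have hp : perm_eq (b :: [:: y, a1 & z ++ a0 :: u']) s.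
    rewrite Es hw; apply/permP => p; move: (congr1 (count p) hyz).
    rewrite -!cats1 /= !count_cat /=; lia.
  have nb : b \notin v ++ [:: a2; a0].
    apply: (notin_of (r := a1 :: u')); rewrite Es hw; apply/permP => p.
    rewrite -!cats1 /= ?count_cat /= ?count_cat /=; lia.
  have [G' E'] := blk_step hG hp nb B.
  have szo : size [:: y, a1 & z ++ a0 :: u'] = (size w).+2.
    by rewrite hw size_cat size_rcons /= size_cat sz hv /=; lia.
  have so : odd (size [:: y, a1 & z ++ a0 :: u']) by rewrite szo /= negbK.
  rewrite E' (sig_odd so) /= in G' *.
  exists u', (b :: v), b, (y :: z); split => //.
      by rewrite hw cat_rcons.
    by rewrite /= hv.
  by rewrite /= hyz.
have [u [v [y [z [hw hv hyz hM hG]]]]] := inv (size w) (leqnn _).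
have -> : size s - 3 = size w by rewrite sw; lia.
have u0 : u = [::] by apply/nilP; move: (congr1 size hw); rewrite size_cat hv /nilp; lia.
subst u; rewrite cat0s in hw; subst v.
move: hM hG; case: (iter _ F _) => o M /= -> hG.
rewrite m3 move01 /=.
case B3: (blk _) => [o3 L3].
have hp3 : perm_eq (a1 :: [:: y & z ++ [:: a0]]) s.
  rewrite Es; apply/permP => p; move: (congr1 (count p) hyz).
  rewrite -?cats1 /= ?count_cat /= ?count_cat /=; lia.
have n3 : a1 \notin w ++ [:: a2; a0].
  apply: (notin_of (r := [::])); rewrite Es; apply/permP => p.
  rewrite -?cats1 /= ?count_cat /= ?count_cat /=; lia.
have [G3 E3] := blk_step hG hp3 n3 B3.
split.
  apply: (good_fin G3); rewrite Es; apply/permP => p.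
  rewrite -?cats1 /= ?count_cat /= ?count_cat /=; lia.
rewrite E3 sig_odd; last first.
  have : size (y :: z ++ [:: a0]) = (size w).+2.
    by move: (congr1 size hyz); rewrite /= !size_cat /=; lia.
  by move=> ->; rewrite /= negbK.
move: hyz ow; rewrite Es; case: (w) => [|a3 [|a4 w'']] //= [-> ->] ow /=.
  by rewrite /sig.
rewrite /sig /=.
by move: ow; rewrite !negbK => ->; rewrite -catA.
Qed.

Lemma lev_two : size s = 2 -> Spec (lev blk 0 s).1 s /\ (lev blk 0 s).2 = sig s.
Proof.
move=> s2.
have [a0 [a1 Es]] : exists a0 a1, s = [:: a0; a1].
  by case: (s) s2 => [|a0 [|a1 [|a2 w]]] // _; exists a0, a1.
rewrite /lev s2 /= Es.
case B1: (blk _) => [o1 L1].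
have hp1 : perm_eq [:: a0; a1] s by rewrite Es.
have [G1 E1] := blk_step good0 hp1 (isT : a0 \notin [::]) B1.
rewrite E1 move01 /=.
case B2: (blk _) => [o2 L2].
have hp2 : perm_eq [:: a1; a0] s by rewrite Es; permt.
have n2 : a1 \notin [:: a0] by apply: (notin_of (r := [::])); rewrite Es; permt.
have [G2 E2] := blk_step G1 hp2 n2 B2.
rewrite cat0s in G2.
rewrite E2; split => //.
by rewrite -Es /=; apply: (good_fin G2); rewrite Es; permt.
Qed.

Lemma rd_cons y t : exists r, rd (y :: t) = y :: r.
Proof. by case: t => [|x1 [|x2 [|x3 [|x4 w]]]]; eexists. Qed.

Lemma lev_odd : odd (size s) -> 3 <= size s ->
  Spec (lev blk 0 s).1 s /\ (lev blk 0 s).2 = sig s.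
Proof.
move=> hodd m3.
have [x0 [t0 Es]] : exists x0 t0, s = x0 :: t0.
  by case: (s) m3 => [|x0 t0] // _; exists x0, t0.
set R := rd s.
have sR : size R = size s by rewrite (perm_size (perm_rd s)).
have uR : uniq R by rewrite (perm_uniq (perm_rd s)).
have Sp : forall k, perm_eq (iter k g s) s.
  elim=> [|k IH] //=; exact: (perm_trans (perm_g _) IH).
have Ss : forall k, size (iter k g s) = size s by move=> k; exact: perm_size (Sp k).
have rdS : forall k, k <= size s -> rd (iter k g s) = rot k R.
  elim=> [|k IH] hk; first by rewrite rot0.
  rewrite iterS rd_g ?Ss // IH ?(ltnW hk) // -(rotD (m := 1)) //.
  by rewrite sR.
have hS : forall k, k < size s -> exists t, iter k g s = nth x0 R k :: t.
  move=> k hk; have := rdS k (ltnW hk).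
  case E: (iter k g s) => [|y t].
    by move: (Ss k); rewrite E /=; lia.
  have [r ->] := rd_cons y t.
  by rewrite /rot (drop_nth x0) ?sR // => -[-> _]; exists t.
have oddblk : forall k o o' L', k < size s -> Good o (rev (take k R)) ->
    blk (iter k g s) = (o', L') ->
    Good (o ++ o') (rev (take k.+1 R)) /\ L' = swap (iter k.+1 g s).
  move=> k o o' L' hk hG hB.
  have [t Et] := hS k hk.
  rewrite Et in hB.
  have hp : perm_eq (nth x0 R k :: t) s by rewrite -Et.
  have hn : nth x0 R k \notin rev (take k R).
    rewrite mem_rev; move: uR; rewrite -{1}(cat_take_drop k R) (drop_nth x0) ?sR //.
    rewrite cat_uniq => /and3P [_ h _]; apply/negP => hin; move: h.
    by rewrite /= hin.
  have [G' E'] := blk_step hG hp hn hB.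
  rewrite (take_nth x0) ?sR // rev_rcons; split => //.
  by rewrite iterS Et /g swapK E'.
have m0 : 0 < size s by lia.
have m1 : 1 < size s by lia.
rewrite /lev subn0 hodd.
set F := (fun '(o, M) => _).
have G0 : Good [::] (rev (take 0 R)) by rewrite take0; exact good0.
case B1: (blk s) => [o1 L1].
have [G1 E1] := oddblk 0 _ _ _ m0 G0 B1.
rewrite E1 move01 swapK.
case B2: (blk _) => [o2 L2].
have [G2 E2] := oddblk 1 _ _ _ m1 G1 B2.
rewrite cat0s in G2; rewrite E2.
have inv : forall r, r <= size s - 3 ->
  (iter r F (o1 ++ o2, swap (iter 2 g s))).2 = swap (iter r.+2 g s) /\
  Good (iter r F (o1 ++ o2, swap (iter 2 g s))).1 (rev (take r.+2 R)).
  elim=> [_|r IH hr]; first by split.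
  have [h1 h2] := IH (ltnW hr).
  rewrite iterS; move: h1 h2; case: (iter r F _) => o M /= -> hG.
  rewrite /F move01 swapK.
  case B: (blk _) => [o' M'].
  have hr2 : r.+2 < size s by lia.
  have [G' E'] := oddblk r.+2 _ _ _ hr2 hG B.
  by rewrite E'.
have [h1 h2] := inv (size s - 3) (leqnn _).
have e : (size s - 3).+2 = (size s).-1 by lia.
rewrite e in h1 h2.
move: h1 h2; case: (iter _ F _) => o M /= -> hG.
rewrite m3 move01 swapK.
case B: (blk _) => [o' M'].
have hr2 : (size s).-1 < size s by lia.
have [G' E'] := oddblk _ _ _ _ hr2 hG B.
have e2 : (size s).-1.+1 = size s by lia.
rewrite e2 in G' E'.
have Sm : iter (size s) g s = s.
  apply: rd_inj; rewrite ?Ss //.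
  by rewrite rdS // -sR rot_size.
rewrite E' Sm sig_odd //; split => //.
apply: (good_fin G').
by rewrite -sR take_size perm_rev perm_rd.
Qed.

Lemma lev_ok : Spec (lev blk 0 s).1 s /\ (lev blk 0 s).2 = sig s.
Proof.
case: (boolP (odd (size s))) => ho.
  by apply: lev_odd => //; move: ho m2; case: (size s) => [|[|[|n]]].
have [e|m3] : size s = 2 \/ 3 <= size s by lia.
  exact: lev_two.
exact: lev_even.
Qed.
End Level.

Lemma base_ok s : size s <= 1 -> Spec [:: s] s /\ s = sig s.
Proof.
case: s => [|a [|b r]] //= _; split => //; split => // u; rewrite in_cons in_nil orbF;
  split => [/eqP -> //|].
  by move/perm_size; case: u.
move=> p; have := perm_size p; case: u p => [|c [|d r]] // p _.
by move: (perm_mem p a); rewrite !in_cons in_nil !orbF eqxx => /eqP ->.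
Qed.

Lemma main f s : uniq s -> (size s).-1 <= f ->
  Spec (perm_aux f 0 s).1 s /\ (perm_aux f 0 s).2 = sig s.
Proof.
elim: f s => [|f IH] s us hf.
  by apply: base_ok; move: hf; case: (size s) => [|[|]].
rewrite perm_auxS; case: ifP => h.
  by apply: base_ok; move: h; case: (size s) => [|[|]].
apply: lev_ok => //; first by move: h; case: (size s) => [|[|]].
move=> x t hp.
have ut : uniq t by move: (perm_uniq hp); rewrite us => /= /andP[].
have st : (size t).+1 = size s by rewrite -(perm_size hp).
have [[u1 s1 m1] e] := IH t ut (ltac:(lia)).
rewrite perm_aux_shift /phi /=; split; first by rewrite e.
by exists (perm_aux f 0 t).1.
Qed.
End Main.

Theorem mainTheorem3 (T : eqType) (k : nat) (L : seq T) :
  size L = k -> uniq L ->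
  [/\ size (func_calls L 0) = k`!,
      uniq (func_calls L 0) &
      forall s : seq T, s \in func_calls L 0 <-> perm_eq s L].
Proof.
move=> hk uL.
have [[u1 s1 m1] _] := main uL (leq_pred (size L)).
by rewrite /func_calls /Permutations; split => //; rewrite -hk.
Qed.
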